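(* Let $a\in C^1([0,T]\times[-\pi,\pi])$ solve $$\partial_t a+\Big(\int_{-\pi}^x a(t,\bar x)\,d\bar x\Big)\partial_x a-a^2+\frac1\pi\int_{-\pi}^{\pi}a^2\,dx=0,\qquad \int_{-\pi}^\pi a(t,x)dx=0,$$ and set $a_0=a(0,\cdot)$. Assume $\partial_x a_0(x_0^* )=0$ at some point $x_0^*$. Then for all $t\in[0,T]$, $\partial_x a(t,x^*(t))=0$, where $x^*$ is the characteristic starting from $x_0^*$.
   Context: The characteristic starting from $x_0^*$ is the solution of $\frac{d}{dt}x^*(t)=\int_{-\pi}^{x^*(t)}a(t,x)\,dx$, $x^*(0)=x_0^*$. *)

(* Defs.v *)
From Stdlib Require Import Reals.
From Coquelicot Require Import Coquelicot.
Open Scope R_scope.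

Definition rect (T : R) (p : R * R) : Prop :=
  0 <= fst p <= T /\ - PI <= snd p <= PI.

Definition cont_on_rect (T : R) (f : R -> R -> R) : Prop :=
  forall p : R * R, rect T p ->
    filterlim (fun q : R * R => f (fst q) (snd q))
      (within (rect T) (locally p)) (locally (f (fst p) (snd p))).

Definition C1_rect (T : R) (a at_ ax : R -> R -> R) : Prop :=
  (forall t x, 0 < t < T -> - PI < x < PI ->
     is_derive (fun s => a s x) t (at_ t x) /\
     is_derive (fun y => a t y) x (ax t x)) /\
  cont_on_rect T a /\ cont_on_rect T at_ /\ cont_on_rect T ax.

Definition characteristic (T : R) (a : R -> R -> R) (x0 : R) (xs : R -> R) : Prop :=
  xs 0 = x0 /\
  (forall t, 0 <= t <= T -> - PI <= xs t <= PI) /\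
  (forall t, 0 <= t <= T ->
     filterlim xs (within (fun s => 0 <= s <= T) (locally t)) (locally (xs t))) /\
  (forall t, 0 < t < T ->
     is_derive xs t (RInt (fun x => a t x) (- PI) (xs t))).

(* Main.v *)
Require Import Defs.
From Stdlib Require Import Reals Lra Lia.
From Coquelicot Require Import Coquelicot.
Open Scope R_scope.
Definition clamp (lo hi x : R) := Rmax lo (Rmin hi x).
Lemma clamp_id lo hi x : lo <= x <= hi -> clamp lo hi x = x.
Proof. unfold clamp, Rmax, Rmin; repeat destruct Rle_dec; lra. Qed.
Lemma clamp_in lo hi x : lo <= hi -> lo <= clamp lo hi x <= hi.
Proof. unfold clamp, Rmax, Rmin; repeat destruct Rle_dec; lra. Qed.
Lemma clamp_lip lo hi x y : Rabs (clamp lo hi x - clamp lo hi y) <= Rabs (x - y).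
Proof. unfold clamp, Rmax, Rmin, Rabs; repeat destruct Rle_dec; repeat destruct Rcase_abs; lra. Qed.

Lemma cont_pt_intro f x : (forall eps, 0 < eps -> exists d, 0 < d /\ forall y, Rabs (y - x) < d -> Rabs (f y - f x) < eps) -> continuity_pt f x.
Proof.
  intros H eps He. destruct (H eps He) as [d [Hd H']]. exists d; split; auto.
  intros y [_ Hy]. apply H'. exact Hy.
Qed.
Lemma cont_pt_elim f x : continuity_pt f x -> forall eps, 0 < eps -> exists d, 0 < d /\ forall y, Rabs (y - x) < d -> Rabs (f y - f x) < eps.
Proof.
  intros H eps He. destruct (H eps He) as [d [Hd H']]. exists d; split; auto.
  intros y Hy. destruct (Req_dec y x) as [->|Hne].
  - rewrite Rminus_diag, Rabs_R0; auto.
  - apply H'. split; [split; [exact I| auto] | exact Hy].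
Qed.

Lemma cont2d_comp g u v s : continuity_2d_pt g (u s) (v s) -> continuity_pt u s -> continuity_pt v s ->
  continuity_pt (fun s => g (u s) (v s)) s.
Proof.
  intros Hg Hu Hv. apply cont_pt_intro. intros eps He.
  destruct (Hg (mkposreal eps He)) as [d Hd].
  destruct (cont_pt_elim u s Hu d (cond_pos d)) as [d1 [Hd1 H1]].
  destruct (cont_pt_elim v s Hv d (cond_pos d)) as [d2 [Hd2 H2]].
  exists (Rmin d1 d2); split; [apply Rmin_pos; auto|].
  intros y Hy. apply (Hd (u y) (v y)).
  - apply H1. eapply Rlt_le_trans; [exact Hy| apply Rmin_l].
  - apply H2. eapply Rlt_le_trans; [exact Hy| apply Rmin_r].
Qed.

Lemma cont2d_1 g t x : continuity_2d_pt g t x -> continuity_pt (fun y => g t y) x.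
Proof.
  intros H. apply (cont2d_comp g (fun _ => t) (fun y => y)); auto.
  apply continuity_pt_const. intros ? ?; auto. apply continuity_pt_id.
Qed.
Lemma cont2d_0 g t x : continuity_2d_pt g t x -> continuity_pt (fun s => g s x) t.
Proof.
  intros H. apply (cont2d_comp g (fun s => s) (fun _ => x)); auto.
  apply continuity_pt_id. apply continuity_pt_const. intros ? ?; auto.
Qed.

Lemma cont_pt_continuous f x : continuity_pt f x -> continuous f x.
Proof. intros H. apply continuity_pt_filterlim. exact H. Qed.

Lemma clamp_cont lo hi x : continuity_pt (clamp lo hi) x.
Proof.
  apply cont_pt_intro. intros eps He. exists eps; split; auto.
  intros y Hy. eapply Rle_lt_trans; [apply clamp_lip| exact Hy].
Qed.

Lemma within_cont_clamp (f : R -> R) T s : 0 <= T ->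
  (forall t, 0 <= t <= T -> filterlim f (within (fun s => 0 <= s <= T) (locally t)) (locally (f t))) ->
  continuity_pt (fun s => f (clamp 0 T s)) s.
Proof.
  intros HT Hf. apply cont_pt_intro. intros eps He.
  assert (Hc := clamp_in 0 T s HT).
  specialize (Hf _ Hc). apply filterlim_locally with (eps := mkposreal eps He) in Hf.
  destruct Hf as [d Hd]. exists d; split; [apply cond_pos|].
  intros y Hy. apply (Hd (clamp 0 T y)).
  - change (Rabs (clamp 0 T y - clamp 0 T s) < d).
    eapply Rle_lt_trans; [apply clamp_lip| exact Hy].
  - apply clamp_in; auto.
Qed.

Lemma closure_le (phi : R -> R) (P : R -> Prop) z c : continuity_pt phi z ->
  (forall d, 0 < d -> exists z', Rabs (z' - z) < d /\ P z') ->
  (forall z', P z' -> phi z' <= c) -> phi z <= c.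
Proof.
  intros Hc Hd HP. apply Rle_plus_epsilon. intros e He.
  destruct (cont_pt_elim _ _ Hc e He) as [d [Hd0 H]].
  destruct (Hd d Hd0) as [z' [Hz' Pz']].
  specialize (H z' Hz'). specialize (HP z' Pz').
  apply Rabs_lt_between in H. lra.
Qed.

Lemma dense_int lo hi z : lo < hi -> lo <= z <= hi ->
  forall d, 0 < d -> exists z', Rabs (z' - z) < d /\ lo < z' < hi.
Proof.
  intros Hlh Hz d Hd.
  set (e := Rmin (d / 2) ((hi - lo) / 4)).
  assert (He : 0 < e) by (apply Rmin_pos; lra).
  assert (He1 : e <= d / 2) by apply Rmin_l.
  assert (He2 : e <= (hi - lo) / 4) by apply Rmin_r.
  destruct (Rle_dec z ((lo + hi) / 2)).
  - exists (z + e). rewrite Rabs_pos_eq by lra. split; lra.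
  - exists (z - e). rewrite Rabs_left by lra. split; lra.
Qed.
Definition ext (T : R) (f : R -> R -> R) t x := f (clamp 0 T t) (clamp (-PI) PI x).
Lemma ball_R (x e y : R) : ball x e y <-> Rabs (y - x) < e.
Proof. reflexivity. Qed.

Lemma ext_cont T f : 0 <= T -> cont_on_rect T f ->
  forall t x, continuity_2d_pt (ext T f) t x.
Proof.
  intros HT Hf t x eps.
  set (p := (clamp 0 T t, clamp (-PI) PI x)).
  assert (Hp : rect T p).
  { unfold rect, p; simpl; split; apply clamp_in; [lra| pose proof PI_RGT_0; lra]. }
  specialize (Hf p Hp). apply filterlim_locally with (eps := eps) in Hf.
  destruct Hf as [d Hd].
  exists d. intros u v Hu Hv.
  assert (H1 := Hd (clamp 0 T u, clamp (-PI) PI v)).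
  simpl in H1. unfold ext. apply H1.
  - split; simpl; apply ball_R.
    + eapply Rle_lt_trans; [apply clamp_lip| exact Hu].
    + eapply Rle_lt_trans; [apply clamp_lip| exact Hv].
  - unfold rect; simpl; split; apply clamp_in; [lra| pose proof PI_RGT_0; lra].
Qed.
Lemma UC (g : R -> R -> R) T : (forall t x, continuity_2d_pt g t x) ->
  forall eps, 0 < eps -> exists d, 0 < d /\ forall t x t' x',
   0 <= t <= T -> -PI <= x <= PI -> 0 <= t' <= T -> -PI <= x' <= PI ->
   Rabs (t' - t) < d -> Rabs (x' - x) < d -> Rabs (g t' x' - g t x) < eps.
Proof.
  intros Hg eps He.
  destruct (uniform_continuity_2d g 0 T (-PI) PI (fun x y _ _ => Hg x y) (mkposreal eps He)) as [d Hd].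
  exists d; split; [apply cond_pos|]. intros; apply Hd; auto.
Qed.

Lemma bound2d (g : R -> R -> R) T : 0 <= T -> (forall t x, continuity_2d_pt g t x) ->
  exists M, 0 <= M /\ forall t x, 0 <= t <= T -> -PI <= x <= PI -> Rabs (g t x) <= M.
Proof.
  intros HT Hg. pose proof PI_RGT_0 as Hpi.
  destruct (UC g T Hg 1 Rlt_0_1) as [d [Hd HU]].
  set (Sm := T + 2 * PI + 1).
  assert (HS : 0 < Sm) by (unfold Sm; lra).
  destruct (archimed_cor1 (d / Sm)) as [N [HN1 HN2]].
  { apply Rdiv_lt_0_compat; lra. }
  assert (HNp : 0 < INR N) by (apply lt_0_INR; lia).
  assert (HSN : Sm / INR N < d).
  { apply (Rmult_lt_reg_r (/ Sm)). apply Rinv_0_lt_compat; lra.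
    replace (Sm / INR N * / Sm) with (/ INR N) by (field; lra). unfold Rdiv in HN1. lra. }
  exists (Rabs (g 0 (-PI)) + INR N). split. { pose proof (Rabs_pos (g 0 (-PI))); lra. }
  intros t x Ht Hx.
  assert (Hk : forall k, (k <= N)%nat ->
     Rabs (g (INR k * (t / INR N)) (-PI + INR k * ((x + PI) / INR N)) - g 0 (-PI)) <= INR k).
  { induction k as [|k IH]; intros Hk.
    - simpl. replace (0 * (t / INR N)) with 0 by ring.
      replace (-PI + 0 * ((x + PI) / INR N)) with (-PI) by ring.
      rewrite Rminus_diag, Rabs_R0; lra.
    - assert (Hk' : (k <= N)%nat) by lia. specialize (IH Hk').
      assert (HkN : INR k <= INR N) by (apply le_INR; lia).
      assert (HSkN : INR (S k) <= INR N) by (apply le_INR; lia).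
      rewrite S_INR in HSkN |- *.
      assert (Hk0 : 0 <= INR k) by apply pos_INR.
      assert (Htn : 0 <= t / INR N) by (apply Rdiv_le_0_compat; lra).
      assert (Hxn : 0 <= (x + PI) / INR N) by (apply Rdiv_le_0_compat; lra).
      assert (Htn2 : t / INR N < d).
      { apply Rle_lt_trans with (Sm / INR N); [|exact HSN].
        unfold Rdiv; apply Rmult_le_compat_r; [left; apply Rinv_0_lt_compat; lra| unfold Sm; lra]. }
      assert (Hxn2 : (x + PI) / INR N < d).
      { apply Rle_lt_trans with (Sm / INR N); [|exact HSN].
        unfold Rdiv; apply Rmult_le_compat_r; [left; apply Rinv_0_lt_compat; lra| unfold Sm; lra]. }
      assert (HtN : INR N * (t / INR N) = t) by (field; lra).
      assert (HxN : INR N * ((x + PI) / INR N) = x + PI) by (field; lra).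
      assert (R1 : 0 <= INR k * (t / INR N) <= T).
      { split; [apply Rmult_le_pos; lra|].
        apply Rle_trans with (INR N * (t / INR N)); [apply Rmult_le_compat_r; lra| lra]. }
      assert (R2 : 0 <= (INR k + 1) * (t / INR N) <= T).
      { split; [apply Rmult_le_pos; lra|].
        apply Rle_trans with (INR N * (t / INR N)); [apply Rmult_le_compat_r; lra| lra]. }
      assert (R3 : -PI <= -PI + INR k * ((x + PI) / INR N) <= PI).
      { split; [assert (0 <= INR k * ((x + PI) / INR N)) by (apply Rmult_le_pos; lra); lra|].
        assert (INR k * ((x + PI) / INR N) <= INR N * ((x + PI) / INR N)) by (apply Rmult_le_compat_r; lra). lra. }
      assert (R4 : -PI <= -PI + (INR k + 1) * ((x + PI) / INR N) <= PI).
      { split; [assert (0 <= (INR k + 1) * ((x + PI) / INR N)) by (apply Rmult_le_pos; lra); lra|].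
        assert ((INR k + 1) * ((x + PI) / INR N) <= INR N * ((x + PI) / INR N)) by (apply Rmult_le_compat_r; lra). lra. }
      assert (Hstep := HU _ _ _ _ R1 R3 R2 R4).
      assert (E1 : (INR k + 1) * (t / INR N) - INR k * (t / INR N) = t / INR N) by ring.
      assert (E2 : -PI + (INR k + 1) * ((x + PI) / INR N) - (-PI + INR k * ((x + PI) / INR N)) = (x + PI) / INR N) by ring.
      rewrite E1, E2 in Hstep. rewrite !Rabs_pos_eq in Hstep by lra.
      specialize (Hstep Htn2 Hxn2).
      eapply Rle_trans; [|apply Rplus_le_compat; [exact IH| left; exact Hstep]].
      eapply Rle_trans; [|apply Rabs_triang]. right; f_equal; ring. }
  specialize (Hk N (le_n N)).
  assert (HtN : INR N * (t / INR N) = t) by (field; lra).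
  assert (HxN : -PI + INR N * ((x + PI) / INR N) = x) by (field; lra).
  rewrite HtN, HxN in Hk.
  pose proof (Rabs_triang (g t x - g 0 (-PI)) (g 0 (-PI))).
  replace (g t x - g 0 (-PI) + g 0 (-PI)) with (g t x) in H by ring. lra.
Qed.


Lemma ext_eq T f t x : 0 <= t <= T -> -PI <= x <= PI -> ext T f t x = f t x.
Proof. intros; unfold ext; rewrite !clamp_id; auto. Qed.

Lemma locally_interval lo hi x : lo < x < hi -> locally x (fun y => lo < y < hi).
Proof.
  intros Hx. assert (He : 0 < Rmin (x - lo) (hi - x)) by (apply Rmin_pos; lra).
  exists (mkposreal _ He). intros y Hy. change (Rabs (y - x) < Rmin (x - lo) (hi - x)) in Hy.
  pose proof (Rmin_l (x - lo) (hi - x)). pose proof (Rmin_r (x - lo) (hi - x)).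
  apply Rabs_lt_between in Hy. lra.
Qed.

Lemma deriv_x T a at_ ax t x : C1_rect T a at_ ax -> 0 < t < T -> -PI < x < PI ->
  is_derive (fun y => ext T a t y) x (ext T ax t x).
Proof.
  intros [HD _] Ht Hx. rewrite ext_eq by lra.
  apply is_derive_ext_loc with (f := fun y => a t y); [|apply (HD t x Ht Hx)].
  apply filter_imp with (2 := locally_interval _ _ _ Hx). intros y Hy. simpl.
  rewrite ext_eq by lra. reflexivity.
Qed.

Lemma deriv_t T a at_ ax t x : C1_rect T a at_ ax -> 0 < t < T -> -PI < x < PI ->
  is_derive (fun s => ext T a s x) t (ext T at_ t x).
Proof.
  intros [HD _] Ht Hx. rewrite ext_eq by lra.
  apply is_derive_ext_loc with (f := fun s => a s x); [|apply (HD t x Ht Hx)].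
  apply filter_imp with (2 := locally_interval _ _ _ Ht). intros y Hy. simpl.
  rewrite ext_eq by lra. reflexivity.
Qed.

Lemma conts T a at_ ax : 0 <= T -> C1_rect T a at_ ax ->
  (forall t x, continuity_2d_pt (ext T a) t x) /\
  (forall t x, continuity_2d_pt (ext T at_) t x) /\
  (forall t x, continuity_2d_pt (ext T ax) t x).
Proof.
  intros HT [_ [H1 [H2 H3]]]. split; [|split]; apply ext_cont; auto.
Qed.

Lemma F1 T a at_ ax : 0 < T -> C1_rect T a at_ ax ->
  forall eps, 0 < eps -> exists d, 0 < d /\ forall t y y',
   0 <= t <= T -> -PI <= y <= PI -> -PI <= y' <= PI -> Rabs (y' - y) < d ->
   Rabs (ext T a t y' - ext T a t y - ext T ax t y * (y' - y)) <= eps * Rabs (y' - y).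
Proof.
  intros HT HC eps He. pose proof PI_RGT_0 as Hpi.
  destruct (conts T a at_ ax (Rlt_le _ _ HT) HC) as [Ca [Ct Cx]].
  destruct (UC _ T Cx eps He) as [d [Hd HU]].
  exists d; split; auto. intros t y y' Ht Hy Hy' Hyy.
  apply (closure_le (fun s => Rabs (ext T a s y' - ext T a s y - ext T ax s y * (y' - y))) (fun s => 0 < s < T)).
  - apply continuity_pt_comp with (f2 := Rabs); [|apply Rcontinuity_abs].
    apply continuity_pt_minus; [apply continuity_pt_minus|apply continuity_pt_mult].
    all: try (apply cont2d_0; auto). apply continuity_pt_const. intros ? ?; auto.
  - apply dense_int; auto; lra.
  - intros s Hs.
    destruct (MVT_gen (fun z => ext T a s z) y y' (fun z => ext T ax s z)) as [c [Hc Hm]].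
    + intros z Hz. apply deriv_x with (at_ := at_); auto.
      pose proof (Rmin_l y y'); pose proof (Rmin_r y y'); pose proof (Rmax_l y y'); pose proof (Rmax_r y y').
      assert (Rmin y y' >= -PI) by (unfold Rmin; destruct Rle_dec; lra).
      assert (Rmax y y' <= PI) by (unfold Rmax; destruct Rle_dec; lra). lra.
    + intros z _. apply cont2d_1; auto.
    + simpl. rewrite Hm.
      replace (ext T ax s c * (y' - y) - ext T ax s y * (y' - y)) with ((ext T ax s c - ext T ax s y) * (y' - y)) by ring.
      rewrite Rabs_mult. apply Rmult_le_compat_r; [apply Rabs_pos|].
      assert (Hc' : Rmin y y' <= c <= Rmax y y') by exact Hc.
      assert (-PI <= c <= PI /\ Rabs (c - y) <= Rabs (y' - y)).
      { unfold Rmin, Rmax in Hc'; destruct Rle_dec; unfold Rabs; repeat destruct Rcase_abs; split; lra. }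
      left. apply HU; try lra. rewrite Rminus_diag, Rabs_R0; auto.
Qed.

Lemma T1 T a at_ ax : 0 < T -> C1_rect T a at_ ax ->
  forall eps, 0 < eps -> exists d, 0 < d /\ forall t t' y,
   0 < t < T -> 0 < t' < T -> -PI <= y <= PI -> Rabs (t' - t) < d ->
   Rabs (ext T a t' y - ext T a t y - ext T at_ t y * (t' - t)) <= eps * Rabs (t' - t).
Proof.
  intros HT HC eps He. pose proof PI_RGT_0 as Hpi.
  destruct (conts T a at_ ax (Rlt_le _ _ HT) HC) as [Ca [Ct Cx]].
  destruct (UC _ T Ct eps He) as [d [Hd HU]].
  exists d; split; auto. intros t t' y Ht Ht' Hy Htt.
  apply (closure_le (fun z => Rabs (ext T a t' z - ext T a t z - ext T at_ t z * (t' - t))) (fun z => -PI < z < PI)).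
  - apply continuity_pt_comp with (f2 := Rabs); [|apply Rcontinuity_abs].
    apply continuity_pt_minus; [apply continuity_pt_minus|apply continuity_pt_mult].
    all: try (apply cont2d_1; auto). apply continuity_pt_const. intros ? ?; auto.
  - apply dense_int; auto; lra.
  - intros z Hz.
    destruct (MVT_gen (fun s => ext T a s z) t t' (fun s => ext T at_ s z)) as [c [Hc Hm]].
    + intros s Hs. apply deriv_t with (ax := ax); auto.
      assert (Rmin t t' > 0) by (unfold Rmin; destruct Rle_dec; lra).
      assert (Rmax t t' < T) by (unfold Rmax; destruct Rle_dec; lra). lra.
    + intros s _. apply cont2d_0; auto.
    + simpl. rewrite Hm.
      replace (ext T at_ c z * (t' - t) - ext T at_ t z * (t' - t)) with ((ext T at_ c z - ext T at_ t z) * (t' - t)) by ring.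
      rewrite Rabs_mult. apply Rmult_le_compat_r; [apply Rabs_pos|].
      assert (Hc' : Rmin t t' <= c <= Rmax t t') by exact Hc.
      assert (0 <= c <= T /\ Rabs (c - t) <= Rabs (t' - t)).
      { unfold Rmin, Rmax in Hc'; destruct Rle_dec; unfold Rabs; repeat destruct Rcase_abs; split; lra. }
      left. apply HU; try lra. rewrite Rminus_diag, Rabs_R0; auto.
Qed.


Lemma D2 T a at_ ax : 0 < T -> C1_rect T a at_ ax ->
  forall eps, 0 < eps -> exists d, 0 < d /\ forall t t' y y',
   0 < t < T -> 0 < t' < T -> -PI <= y <= PI -> -PI <= y' <= PI ->
   Rabs (t' - t) < d -> Rabs (y' - y) < d ->
   Rabs (ext T a t' y' - ext T a t y - ext T at_ t y * (t' - t) - ext T ax t y * (y' - y))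
     <= 2 * eps * (Rabs (t' - t) + Rabs (y' - y)).
Proof.
  intros HT HC eps He.
  destruct (conts T a at_ ax (Rlt_le _ _ HT) HC) as [Ca [Ct Cx]].
  destruct (F1 T a at_ ax HT HC eps He) as [d1 [Hd1 H1]].
  destruct (T1 T a at_ ax HT HC eps He) as [d2 [Hd2 H2]].
  destruct (UC _ T Cx eps He) as [d3 [Hd3 H3]].
  exists (Rmin d1 (Rmin d2 d3)). split. { repeat apply Rmin_pos; auto. }
  intros t t' y y' Ht Ht' Hy Hy' Htt Hyy.
  pose proof (Rmin_l d1 (Rmin d2 d3)). pose proof (Rmin_r d1 (Rmin d2 d3)).
  pose proof (Rmin_l d2 d3). pose proof (Rmin_r d2 d3).
  assert (A1 := H1 t' y y' ltac:(lra) Hy Hy' ltac:(lra)).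
  assert (A2 := H2 t t' y Ht Ht' Hy ltac:(lra)).
  assert (A3 : Rabs (ext T ax t' y - ext T ax t y) < eps).
  { apply H3; try lra. rewrite Rminus_diag, Rabs_R0; lra. }
  replace (ext T a t' y' - ext T a t y - ext T at_ t y * (t' - t) - ext T ax t y * (y' - y))
   with ((ext T a t' y' - ext T a t' y - ext T ax t' y * (y' - y)) + (ext T ax t' y - ext T ax t y) * (y' - y)
         + (ext T a t' y - ext T a t y - ext T at_ t y * (t' - t))) by ring.
  eapply Rle_trans; [apply Rabs_triang|].
  eapply Rle_trans; [apply Rplus_le_compat_r; apply Rabs_triang|].
  rewrite Rabs_mult.
  assert (Rabs (ext T ax t' y - ext T ax t y) * Rabs (y' - y) <= eps * Rabs (y' - y)).
  { apply Rmult_le_compat_r; [apply Rabs_pos| lra]. }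
  pose proof (Rabs_pos (t' - t)). pose proof (Rabs_pos (y' - y)). nra.
Qed.

Lemma chain T a at_ ax (Z : R -> R) s dZ : 0 < T -> C1_rect T a at_ ax -> 0 < s < T ->
  is_derive Z s dZ -> (forall r, 0 < r < T -> -PI <= Z r <= PI) ->
  is_derive (fun r => ext T a r (Z r)) s (ext T at_ s (Z s) + ext T ax s (Z s) * dZ).
Proof.
  intros HT HC Hs HZ HZr. apply is_derive_Reals. apply is_derive_Reals in HZ.
  intros eps He.
  set (Ax := Rabs (ext T ax s (Z s))).
  assert (HAx : 0 <= Ax) by apply Rabs_pos.
  set (e := Rmin 1 (eps / (2 * (Ax + 1)))).
  assert (He0 : 0 < e) by (apply Rmin_pos; [lra| apply Rdiv_lt_0_compat; lra]).
  assert (He1 : e <= 1) by apply Rmin_l.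
  assert (He2 : e <= eps / (2 * (Ax + 1))) by apply Rmin_r.
  assert (HAe : Ax * e < eps / 2).
  { apply Rle_lt_trans with (Ax * (eps / (2 * (Ax + 1)))). apply Rmult_le_compat_l; lra.
    apply (Rmult_lt_reg_r (2 * (Ax + 1))); [lra|].
    replace (Ax * (eps / (2 * (Ax + 1))) * (2 * (Ax + 1))) with (Ax * eps) by (field; lra). nra. }
  destruct (HZ e He0) as [d2 Hd2].
  set (DZ := Rabs dZ).
  assert (HDZ : 0 <= DZ) by apply Rabs_pos.
  set (e' := eps / (8 * (DZ + 2))).
  assert (He' : 0 < e') by (apply Rdiv_lt_0_compat; lra).
  destruct (D2 T a at_ ax HT HC e' He') as [d1 [Hd1 H1]].
  set (dl := Rmin (Rmin d2 (Rmin s (T - s))) (d1 / (DZ + 1))).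
  assert (Hdl : 0 < dl).
  { unfold dl. repeat apply Rmin_pos; try lra. apply cond_pos. apply Rdiv_lt_0_compat; lra. }
  exists (mkposreal dl Hdl). intros h Hh0 Hh. simpl in Hh.
  assert (Hh1 : Rabs h < d2) by (eapply Rlt_le_trans; [exact Hh|]; unfold dl; eapply Rle_trans; apply Rmin_l).
  assert (Hh2 : Rabs h < Rmin s (T - s)) by (eapply Rlt_le_trans; [exact Hh|]; unfold dl;
     eapply Rle_trans; [apply Rmin_l| apply Rmin_r]).
  assert (Hh3 : Rabs h < d1 / (DZ + 1)) by (eapply Rlt_le_trans; [exact Hh| apply Rmin_r]).
  pose proof (Rmin_l s (T - s)). pose proof (Rmin_r s (T - s)).
  assert (Hsh : 0 < s + h < T) by (apply Rabs_lt_between in Hh2; lra).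
  specialize (Hd2 h Hh0 Hh1).
  set (q := (Z (s + h) - Z s) / h) in *.
  assert (HdZ : Z (s + h) - Z s = q * h) by (unfold q; field; auto).
  assert (Hq : Rabs q <= DZ + 1).
  { unfold DZ. pose proof (Rabs_triang (q - dZ) dZ) as Htr. replace (q - dZ + dZ) with q in Htr by ring. lra. }
  assert (Hhp : 0 < Rabs h) by (apply Rabs_pos_lt; auto).
  assert (HDZd : Rabs (Z (s + h) - Z s) <= (DZ + 1) * Rabs h).
  { rewrite HdZ, Rabs_mult. apply Rmult_le_compat_r; lra. }
  assert (Hh4 : Rabs (s + h - s) < d1).
  { replace (s + h - s) with h by ring. eapply Rlt_le_trans; [exact Hh3|].
    apply (Rmult_le_reg_r (DZ + 1)); [lra|].
    replace (d1 / (DZ + 1) * (DZ + 1)) with d1 by (field; lra). nra. }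
  assert (HDZd1 : Rabs (Z (s + h) - Z s) < d1).
  { eapply Rle_lt_trans; [exact HDZd|].
    apply (Rmult_lt_compat_l (DZ + 1)) in Hh3; [|lra].
    replace ((DZ + 1) * (d1 / (DZ + 1))) with d1 in Hh3 by (field; lra). exact Hh3. }
  clear Hh3.
  assert (HE := H1 s (s + h) (Z s) (Z (s + h)) Hs Hsh (HZr s Hs) (HZr _ Hsh) Hh4 HDZd1).
  replace (s + h - s) with h in HE by ring.
  set (err := ext T a (s + h) (Z (s + h)) - ext T a s (Z s) - ext T at_ s (Z s) * h -
          ext T ax s (Z s) * (Z (s + h) - Z s)) in *.
  assert (Herr : Rabs err <= eps / 4 * Rabs h).
  { eapply Rle_trans; [exact HE|].
    apply Rle_trans with (2 * e' * ((DZ + 2) * Rabs h)).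
    - apply Rmult_le_compat_l; lra.
    - right. unfold e'. field. lra. }
  replace ((ext T a (s + h) (Z (s + h)) - ext T a s (Z s)) / h - (ext T at_ s (Z s) + ext T ax s (Z s) * dZ))
    with (err / h + ext T ax s (Z s) * (q - dZ)).
  2:{ unfold err, q. field. auto. }
  eapply Rle_lt_trans; [apply Rabs_triang|].
  rewrite Rabs_mult. unfold Rdiv at 1. rewrite Rabs_mult, Rabs_inv.
  assert (Rabs err * / Rabs h <= eps / 4).
  { apply (Rmult_le_reg_r (Rabs h)); auto. rewrite Rmult_assoc, Rinv_l by lra. lra. }
  assert (Ax * Rabs (q - dZ) <= Ax * e) by (apply Rmult_le_compat_l; lra).
  fold Ax. lra.
Qed.


Lemma exRInt_c (g : R -> R -> R) t u v : (forall t x, continuity_2d_pt g t x) ->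
  ex_RInt (fun x => g t x) u v.
Proof.
  intros Hg. apply (@ex_RInt_continuous R_CompleteNormedModule). intros z _. apply cont_pt_continuous. apply cont2d_1; auto.
Qed.

Lemma A_eq T a t y : 0 <= t <= T -> -PI <= y <= PI ->
  RInt (fun x => a t x) (-PI) y = RInt (fun x => ext T a t x) (-PI) y.
Proof.
  intros Ht Hy. apply RInt_ext. intros x Hx.
  rewrite Rmin_left in Hx by lra. rewrite Rmax_right in Hx by lra.
  rewrite ext_eq; auto; lra.
Qed.

Lemma abs_RInt_gen f u v M : ex_RInt f u v ->
  (forall z, Rmin u v <= z <= Rmax u v -> Rabs (f z) <= M) ->
  Rabs (RInt f u v) <= Rabs (v - u) * M.
Proof.
  intros He Hb. destruct (Rle_dec u v).
  - rewrite (Rabs_pos_eq (v - u)) by lra. apply abs_RInt_le_const; auto.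
    intros z Hz. apply Hb. rewrite Rmin_left, Rmax_right; lra.
  - rewrite <- (opp_RInt_swap f v u) by (apply ex_RInt_swap; auto).
    change (Rabs (- RInt f v u) <= Rabs (v - u) * M). rewrite Rabs_Ropp.
    rewrite (Rabs_left (v - u)) by lra. replace (- (v - u)) with (u - v) by ring.
    apply abs_RInt_le_const; [lra| apply ex_RInt_swap; auto|].
    intros z Hz. apply Hb. rewrite Rmin_right, Rmax_left; lra.
Qed.

Lemma RInt_diff (g : R -> R -> R) t X Y : (forall t x, continuity_2d_pt g t x) ->
  RInt (fun x => g t x) (-PI) Y - RInt (fun x => g t x) (-PI) X - (Y - X) * g t X
   = RInt (fun z => g t z - g t X) X Y.
Proof.
  intros Hg.
  rewrite <- (RInt_Chasles (fun x => g t x) (-PI) X Y) by (apply exRInt_c; auto).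
  rewrite (RInt_minus (fun z => g t z) (fun _ => g t X)); [| apply exRInt_c; auto| apply ex_RInt_const].
  rewrite RInt_const.
  change (RInt (fun x => g t x) (- PI) X + RInt (fun x => g t x) X Y - RInt (fun x => g t x) (- PI) X -
     (Y - X) * g t X = RInt (fun x => g t x) X Y - (Y - X) * g t X). ring.
Qed.


Lemma dmult f g x df dg : is_derive f x df -> is_derive g x dg ->
  is_derive (fun y => f y * g y) x (df * g x + f x * dg).
Proof. intros H1 H2. apply (is_derive_mult f g x df dg H1 H2). intros; apply Rmult_comm. Qed.
Lemma dplus f g x df dg : is_derive f x df -> is_derive g x dg ->
  is_derive (fun y => f y + g y) x (df + dg).
Proof. intros H1 H2. apply (is_derive_plus f g x df dg H1 H2). Qed.
Lemma dminus f g x df dg : is_derive f x df -> is_derive g x dg ->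
  is_derive (fun y => f y - g y) x (df - dg).
Proof. intros H1 H2. apply (is_derive_minus f g x df dg H1 H2). Qed.
Lemma dexp f x df : is_derive f x df -> is_derive (fun y => exp (f y)) x (df * exp (f x)).
Proof. intros H. apply (is_derive_comp exp f x (exp (f x)) df); auto. apply is_derive_exp. Qed.
Lemma dlin c x : is_derive (fun y => c * y) x c.
Proof.
  assert (H := is_derive_scal (fun y => y) x c 1 (is_derive_id x)). simpl in H.
  replace (c * 1) with c in H by ring. exact H.
Qed.
Lemma dsq f x df : is_derive f x df -> is_derive (fun y => f y ^ 2) x (2 * df * f x).
Proof.
  intros H. assert (H2 := is_derive_pow f 2 x df H). simpl in H2.
  replace (2 * df * f x) with ((1 + 1) * df * (f x * 1)) by ring. exact H2.
Qed.

Lemma deriv_cont f x df : is_derive f x df -> continuity_pt f x.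
Proof.
  intros H. apply continuity_pt_filterlim. apply (ex_derive_continuous f x). exists df; exact H.
Qed.

Lemma incr_bound f df s C : 0 <= s -> (forall r, 0 < r < s -> is_derive f r (df r)) ->
  (forall r, 0 <= r <= s -> continuity_pt f r) -> (forall r, 0 < r < s -> df r <= C) ->
  f s - f 0 <= C * s.
Proof.
  intros Hs Hd Hc Hb. destruct (Req_dec s 0) as [->|Hne].
  { rewrite Rminus_diag; lra. }
  assert (Hs' : 0 < s) by lra.
  set (pr1 := fun c (P : 0 < c < s) => exist (fun l => derivable_pt_abs f c l) (df c) (proj1 (is_derive_Reals _ _ _) (Hd c P))).
  set (pr2 := fun c (P : 0 < c < s) => derivable_pt_id c).
  destruct (MVT f id 0 s pr1 pr2 Hs' Hc (fun c _ => derivable_continuous_pt _ _ (derivable_pt_id c))) as [c [P HM]].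
  unfold pr1, pr2 in HM. simpl in HM. rewrite derive_pt_id in HM. unfold id in HM.
  specialize (Hb c P). nra.
Qed.

Lemma bound_ext T f M : 0 <= T -> (forall t x, 0 <= t <= T -> -PI <= x <= PI -> Rabs (f t x) <= M) ->
  forall t x, Rabs (ext T f t x) <= M.
Proof.
  intros HT H t x. unfold ext. apply H; apply clamp_in; [lra| pose proof PI_RGT_0; lra].
Qed.

Lemma zero_from_eps v Q : (forall eps, 0 < eps -> Rabs v <= eps * Q) -> v = 0.
Proof.
  intros H. destruct (Req_dec v 0) as [|Hv]; auto. exfalso.
  assert (Hp : 0 < Rabs v) by (apply Rabs_pos_lt; auto).
  assert (HQ : 0 < Q).
  { specialize (H 1 Rlt_0_1). lra. }
  specialize (H (Rabs v / (2 * Q)) ltac:(apply Rdiv_lt_0_compat; lra)).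
  replace (Rabs v / (2 * Q) * Q) with (Rabs v / 2) in H by (field; lra). lra.
Qed.

Lemma A_bound_l (g : R -> R -> R) K t y : (forall t x, continuity_2d_pt g t x) ->
  (forall t x, Rabs (g t x) <= K) -> -PI <= y ->
  Rabs (RInt (fun x => g t x) (-PI) y) <= K * (y + PI).
Proof.
  intros Hg HK Hy. eapply Rle_trans; [apply abs_RInt_gen with (M := K)|].
  - apply exRInt_c; auto.
  - intros; apply HK.
  - rewrite Rabs_pos_eq by lra. right; ring.
Qed.

Lemma A_bound_r (g : R -> R -> R) K t y : (forall t x, continuity_2d_pt g t x) ->
  (forall t x, Rabs (g t x) <= K) -> y <= PI ->
  RInt (fun x => g t x) (-PI) PI = 0 ->
  Rabs (RInt (fun x => g t x) (-PI) y) <= K * (PI - y).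
Proof.
  intros Hg HK Hy H0.
  rewrite <- (RInt_Chasles (fun x => g t x) (-PI) y PI) in H0 by (apply exRInt_c; auto).
  change (RInt (fun x => g t x) (- PI) y + RInt (fun x => g t x) y PI = 0) in H0.
  replace (RInt (fun x => g t x) (- PI) y) with (- RInt (fun x => g t x) y PI) by lra.
  rewrite Rabs_Ropp.
  eapply Rle_trans; [apply abs_RInt_gen with (M := K)|].
  - apply exRInt_c; auto.
  - intros; apply HK.
  - rewrite Rabs_pos_eq by lra. right; ring.
Qed.

Lemma dconst c x : is_derive (fun _ => c) x 0.
Proof. apply (is_derive_const c x). Qed.


Lemma exp_mono x y : x <= y -> exp x <= exp y.
Proof. intros [H|H]; [left; apply exp_increasing; auto| rewrite H; lra]. Qed.

Lemma margin_gen (P dP : R -> R) K T s : 0 <= K -> 0 <= s <= T -> 0 <= P 0 ->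
  (forall r, 0 < r < s -> is_derive P r (dP r)) -> (forall r, continuity_pt P r) ->
  (forall r, 0 < r < s -> - K * P r <= dP r) -> P 0 * exp (- (K * T)) <= P s.
Proof.
  intros HK Hs HP0 Hd Hc Hb.
  assert (H := incr_bound (fun r => - (P r * exp (K * r)))
     (fun r => - (dP r * exp (K * r) + P r * (K * exp (K * r)))) s 0 (proj1 Hs)).
  simpl in H.
  assert (H' : - (P s * exp (K * s)) - - (P 0 * exp (K * 0)) <= 0 * s).
  { apply H.
    - intros r Hr.
      assert (H2 := dexp (fun y => K * y) r K (dlin K r)). simpl in H2.
      assert (H1 := dmult P (fun y => exp (K*y)) r (dP r) (K * exp (K*r)) (Hd r Hr) H2).
      apply (is_derive_opp _ _ _ H1).
    - intros r _. apply continuity_pt_opp. apply continuity_pt_mult; auto.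
      apply deriv_cont with (df := K * exp (K * r)). apply (dexp (fun y => K * y) r K (dlin K r)).
    - intros r Hr. specialize (Hb r Hr). pose proof (exp_pos (K * r)).
      assert (0 <= (dP r + K * P r) * exp (K * r)) by (apply Rmult_le_pos; lra). nra. }
  rewrite Rmult_0_r, exp_0 in H'.
  assert (HPs : P 0 <= P s * exp (K * s)) by lra.
  assert (E1 : exp (K * s) * exp (- (K * s)) = 1) by (rewrite <- exp_plus; replace (K * s + - (K * s)) with 0 by ring; apply exp_0).
  assert (E2 : exp (- (K * T)) <= exp (- (K * s))) by (apply exp_mono; nra).
  pose proof (exp_pos (- (K * T))). pose proof (exp_pos (- (K * s))).
  apply Rle_trans with (P 0 * exp (- (K * s))). apply Rmult_le_compat_l; lra.
  apply Rle_trans with (P s * exp (K * s) * exp (- (K * s))). apply Rmult_le_compat_r; lra.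
  rewrite Rmult_assoc, E1. lra.
Qed.


Theorem lemma2p4 (T : R) (a at_ ax : R -> R -> R) (x0 : R) (xs : R -> R) :
  C1_rect T a at_ ax ->
  (forall t x, 0 <= t <= T -> - PI <= x <= PI ->
     at_ t x + RInt (fun y => a t y) (- PI) x * ax t x - (a t x) ^ 2
       + / PI * RInt (fun y => (a t y) ^ 2) (- PI) PI = 0) ->
  (forall t, 0 <= t <= T -> RInt (fun y => a t y) (- PI) PI = 0) ->
  - PI <= x0 <= PI ->
  ax 0 x0 = 0 ->
  characteristic T a x0 xs ->
  forall t, 0 <= t <= T -> ax t (xs t) = 0.
Proof.
  intros HC HPDE Hmean Hx0 Hax0 Hchar t Ht.
  destruct Hchar as [Hxs0 [Hxsr [Hxsc Hxsd]]].
  destruct (Rle_lt_dec T 0) as [HT0|HT].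
  { assert (t = 0) by lra. subst t. rewrite Hxs0. exact Hax0. }
  pose proof PI_RGT_0 as Hpi.
  assert (HT' : 0 <= T) by lra.
  destruct (conts T a at_ ax HT' HC) as [Ca [Ct Cx]].
  destruct (bound2d (ext T a) T HT' Ca) as [K [HK0 HKb]].
  assert (HK : forall t x, Rabs (ext T a t x) <= K).
  { apply (bound_ext T a K HT'). intros; rewrite <- ext_eq with (T := T); auto. }
  clear HKb.
  destruct (bound2d (ext T ax) T HT' Cx) as [M1 [HM10 HM1b]].
  assert (HM1 : forall t x, Rabs (ext T ax t x) <= M1).
  { apply (bound_ext T ax M1 HT'). intros; rewrite <- ext_eq with (T := T); auto. }
  clear HM1b.
  set (X := fun s => xs (clamp 0 T s)).
  assert (HXc : forall s, continuity_pt X s) by (intros; apply within_cont_clamp; auto).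
  assert (HXr : forall s, -PI <= X s <= PI) by (intros; apply Hxsr; apply clamp_in; auto).
  assert (HXe : forall s, 0 <= s <= T -> X s = xs s) by (intros; unfold X; rewrite clamp_id; auto).
  assert (Amean : forall r, 0 <= r <= T -> RInt (fun x => ext T a r x) (-PI) PI = 0).
  { intros r Hr. rewrite <- A_eq by (auto; lra). apply Hmean; auto. }
  assert (HXd : forall r, 0 < r < T -> is_derive X r (RInt (fun x => ext T a r x) (-PI) (X r))).
  { intros r Hr. rewrite HXe by lra. rewrite <- A_eq by (auto; try lra; apply Hxsr; lra).
    apply is_derive_ext_loc with (f := xs); [|apply Hxsd; auto].
    apply filter_imp with (2 := locally_interval _ _ _ Hr). intros y Hy. simpl.
    rewrite HXe; auto; lra. }
  set (cc := fun r => / PI * RInt (fun y => (a r y) ^ 2) (- PI) PI).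
  assert (PDEc : forall r z, 0 <= r <= T -> -PI <= z <= PI ->
     ext T at_ r z = - RInt (fun x => ext T a r x) (-PI) z * ext T ax r z + (ext T a r z) ^ 2 - cc r).
  { intros r z Hr Hz. rewrite !ext_eq by auto. rewrite <- A_eq by auto.
    specialize (HPDE r z Hr Hz). unfold cc. lra. }
  assert (Hmargin : exists sg m, (sg = 1 \/ sg = -1) /\ 0 < m /\
     forall s u, 0 <= s <= T -> 0 <= u <= m -> -PI <= X s + sg * u <= PI).
  { destruct (Rlt_le_dec x0 PI) as [Hlt|Hge].
    - exists 1, ((PI - x0) * exp (- (K * T))). split; [left; auto|]. split.
      { apply Rmult_lt_0_compat; [lra| apply exp_pos]. }
      intros s u Hs Hu.
      assert (HM := margin_gen (fun r => PI - X r) (fun r => - RInt (fun x => ext T a r x) (-PI) (X r)) K T s HK0 Hs).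
      simpl in HM. rewrite HXe in HM by lra. rewrite Hxs0 in HM.
      assert (Hm : (PI - x0) * exp (- (K * T)) <= PI - X s).
      { apply HM; [lra| | |].
        - intros r Hr. assert (H := dminus (fun _ => PI) X r 0 _ (dconst PI r) (HXd r ltac:(lra))).
          simpl in H. rewrite Rminus_0_l in H. exact H.
        - intros r. apply continuity_pt_minus; [apply continuity_pt_const; intros ? ?; auto| auto].
        - intros r Hr. assert (HB := A_bound_r (ext T a) K r (X r) Ca HK (proj2 (HXr r)) (Amean r ltac:(lra))).
          apply Rabs_le_between in HB. lra. }
      specialize (HXr s). lra.
    - assert (x0 = PI) by lra. exists (-1), ((x0 + PI) * exp (- (K * T))). split; [right; auto|]. split.
      { apply Rmult_lt_0_compat; [lra| apply exp_pos]. }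
      intros s u Hs Hu.
      assert (HM := margin_gen (fun r => X r + PI) (fun r => RInt (fun x => ext T a r x) (-PI) (X r)) K T s HK0 Hs).
      simpl in HM. rewrite HXe in HM by lra. rewrite Hxs0 in HM.
      assert (Hm : (x0 + PI) * exp (- (K * T)) <= X s + PI).
      { apply HM; [lra| | |].
        - intros r Hr. assert (H9 := dplus X (fun _ => PI) r _ 0 (HXd r ltac:(lra)) (dconst PI r)).
          simpl in H9. rewrite Rplus_0_r in H9. exact H9.
        - intros r. apply continuity_pt_plus; [auto| apply continuity_pt_const; intros ? ?; auto].
        - intros r Hr. assert (HB := A_bound_l (ext T a) K r (X r) Ca HK (proj1 (HXr r))).
          apply Rabs_le_between in HB. lra. }
      specialize (HXr s). lra. }
  destruct Hmargin as [sg [m [Hsg [Hm0 Hm]]]].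
  set (beta := fun r => ext T a r (X r)).
  assert (Hbc : forall r, continuity_pt beta r).
  { intros r. apply (cont2d_comp (ext T a) (fun r => r) X r); auto. apply continuity_pt_id. }
  assert (Hbb : forall r, Rabs (beta r) <= K) by (intros; apply HK).
  set (I := fun r => RInt beta 0 r).
  assert (HexI : forall u v, ex_RInt beta u v).
  { intros u v. apply (@ex_RInt_continuous R_CompleteNormedModule). intros z _. apply cont_pt_continuous; auto. }
  assert (HId : forall r, is_derive I r (beta r)).
  { intros r. apply (is_derive_RInt beta I 0 r).
    - apply filter_forall. intros b. apply (RInt_correct beta 0 b). apply HexI.
    - apply cont_pt_continuous; auto. }
  set (J := fun r => exp (I r)).
  assert (HJd : forall r, is_derive J r (beta r * J r)) by (intros r; apply (dexp I r _ (HId r))).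
  assert (HJc : forall r, continuity_pt J r) by (intros r; apply deriv_cont with (df := beta r * J r); auto).
  set (Jmin := exp (- (K * T))). set (Jmax := exp (K * T)).
  assert (HJb : forall r, 0 <= r <= T -> Jmin <= J r <= Jmax).
  { intros r Hr. assert (HI : Rabs (I r) <= K * T).
    { unfold I. eapply Rle_trans; [apply abs_RInt_gen with (M := K); auto|].
      rewrite Rminus_0_r, Rabs_pos_eq by lra. nra. }
    apply Rabs_le_between in HI. unfold J, Jmin, Jmax. split; apply exp_mono; lra. }
  assert (HJ0 : J 0 = 1).
  { unfold J, I. rewrite RInt_point. apply exp_0. }
  assert (HJmin : 0 < Jmin) by apply exp_pos.
  assert (HJmm : Jmin <= Jmax) by (destruct (HJb 0 ltac:(lra)); lra).
  assert (HJmax1 : 1 <= Jmax).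
  { unfold Jmax. rewrite <- exp_0. apply exp_mono. nra. }
  rewrite <- HXe by auto. rewrite <- (ext_eq T ax t (X t)) by auto.
  set (L := 4 * K + 1). set (C2 := exp (L * T) * (1 + T * M1 ^ 2 * Jmax ^ 2)).
  assert (HC2 : 0 <= C2).
  { unfold C2. apply Rmult_le_pos; [left; apply exp_pos|]. assert (0 <= T * M1 ^ 2 * Jmax ^ 2) by (apply Rmult_le_pos; [apply Rmult_le_pos|]; nra). lra. }
  apply (zero_from_eps _ ((1 + C2 + Jmax) / Jmin)). intros eps He.
  destruct (F1 T a at_ ax HT HC eps He) as [dF [HdF HF]].
  destruct (UC (ext T a) T Ca eps He) as [dA [HdA HA]].
  set (eta := Rmin (Rmin dF dA) m / (2 * Jmax)).
  assert (Hmin1 : Rmin (Rmin dF dA) m <= dF) by (eapply Rle_trans; apply Rmin_l).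
  assert (Hmin2 : Rmin (Rmin dF dA) m <= dA) by (eapply Rle_trans; [apply Rmin_l| apply Rmin_r]).
  assert (Hmin3 : Rmin (Rmin dF dA) m <= m) by apply Rmin_r.
  assert (Hmin0 : 0 < Rmin (Rmin dF dA) m) by (repeat apply Rmin_pos; auto).
  assert (Heta : 0 < eta) by (unfold eta; apply Rdiv_lt_0_compat; lra).
  assert (HetaJ : eta * Jmax = Rmin (Rmin dF dA) m / 2) by (unfold eta; field; lra).
  set (h := sg * eta).
  assert (Hh : Rabs h = eta).
  { unfold h. destruct Hsg as [-> | ->]; [rewrite Rmult_1_l, Rabs_pos_eq; lra|].
    rewrite Rabs_left by lra. ring. }
  set (Y := fun r => X r + h * J r).
  assert (HYr : forall r, 0 <= r <= T -> -PI <= Y r <= PI).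
  { intros r Hr. unfold Y. replace (h * J r) with (sg * (eta * J r)) by (unfold h; ring).
    apply Hm; auto. destruct (HJb r Hr). split; nra. }
  assert (HYX : forall r, 0 <= r <= T -> Rabs (Y r - X r) = eta * J r /\ eta * J r <= eta * Jmax).
  { intros r Hr. destruct (HJb r Hr). unfold Y. replace (X r + h * J r - X r) with (h * J r) by ring.
    rewrite Rabs_mult, Hh, (Rabs_pos_eq (J r)) by lra. split; auto. nra. }
  assert (HYc : forall r, continuity_pt Y r).
  { intros r. apply continuity_pt_plus; auto. apply continuity_pt_scal; auto. }
  set (AX := fun r => RInt (fun x => ext T a r x) (-PI) (X r)).
  set (AY := fun r => RInt (fun x => ext T a r x) (-PI) (Y r)).
  assert (HYd : forall r, 0 < r < T -> is_derive Y r (AX r + h * (beta r * J r))).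
  { intros r Hr. apply dplus; [apply HXd; auto|]. apply is_derive_scal. apply HJd. }
  set (G := fun r => ext T a r (Y r) - ext T a r (X r)).
  set (Gd := fun r => (ext T at_ r (Y r) + ext T ax r (Y r) * (AX r + h * (beta r * J r)))
                    - (ext T at_ r (X r) + ext T ax r (X r) * AX r)).
  assert (HGd : forall r, 0 < r < T -> is_derive G r (Gd r)).
  { intros r Hr. apply dminus.
    - apply (chain T a at_ ax Y r _ HT HC Hr (HYd r Hr)). intros r' Hr'. apply HYr; lra.
    - apply (chain T a at_ ax X r _ HT HC Hr (HXd r Hr)). intros r' Hr'. apply HXr. }
  assert (HGc : forall r, continuity_pt G r).
  { intros r. apply continuity_pt_minus.
    - apply (cont2d_comp (ext T a) (fun r => r) Y r); auto. apply continuity_pt_id.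
    - apply (cont2d_comp (ext T a) (fun r => r) X r); auto. apply continuity_pt_id. }
  set (E := fun r => ext T ax r (Y r) * (AX r + h * (beta r * J r) - AY r)).
  assert (HGE : forall r, 0 < r < T -> Gd r = (ext T a r (Y r) + ext T a r (X r)) * G r + E r).
  { intros r Hr. unfold Gd, E, G. rewrite (PDEc r (Y r)) by (try apply HYr; lra).
    rewrite (PDEc r (X r)) by (try apply HXr; lra). unfold AX, AY. ring. }
  set (Emax := M1 * (eta * Jmax * eps)).
  assert (HEb : forall r, 0 < r < T -> Rabs (E r) <= Emax).
  { intros r Hr. unfold E.
    assert (HD := RInt_diff (ext T a) r (X r) (Y r) Ca).
    replace (AX r + h * (beta r * J r) - AY r)
      with (- RInt (fun z => ext T a r z - ext T a r (X r)) (X r) (Y r)).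
    2:{ rewrite <- HD. unfold AX, AY, beta, Y. ring. }
    rewrite Rabs_mult, Rabs_Ropp.
    destruct (HYX r ltac:(lra)) as [HYX1 HYX2].
    assert (HR : Rabs (RInt (fun z => ext T a r z - ext T a r (X r)) (X r) (Y r)) <= eta * Jmax * eps).
    { eapply Rle_trans; [apply abs_RInt_gen with (M := eps)|].
      - apply (@ex_RInt_continuous R_CompleteNormedModule). intros z _. apply cont_pt_continuous.
        apply continuity_pt_minus; [apply cont2d_1; auto| apply continuity_pt_const; intros ? ?; auto].
      - intros z Hz. left. assert (Hzr : -PI <= z <= PI /\ Rabs (z - X r) <= Rabs (Y r - X r)).
        { pose proof (HYr r ltac:(lra)). pose proof (HXr r).
          unfold Rmin, Rmax in Hz; destruct Rle_dec; unfold Rabs; repeat destruct Rcase_abs; split; lra. }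
        apply HA; try lra. apply HXr. rewrite Rminus_diag, Rabs_R0; auto.
      - rewrite HYX1. apply Rmult_le_compat_r; lra. }
    unfold Emax. apply Rmult_le_compat; auto; apply Rabs_pos. }
  set (W := fun r => G r * G r * exp (- L * r)).
  set (Wd := fun r => (Gd r * G r + G r * Gd r) * exp (- L * r) + G r * G r * (- L * exp (- L * r))).
  assert (HWd : forall r, 0 < r < T -> is_derive W r (Wd r)).
  { intros r Hr. unfold W, Wd. apply (dmult (fun y => G y * G y) (fun y => exp (- L * y))).
    - apply (dmult G G); apply HGd; auto.
    - apply (dexp (fun y => - L * y) r (- L) (dlin (- L) r)). }
  assert (HWc : forall r, continuity_pt W r).
  { intros r. unfold W. apply (continuity_pt_mult (fun y => G y * G y) (fun y => exp (- L * y))); [apply (continuity_pt_mult G G); auto|].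
    apply deriv_cont with (df := - L * exp (- L * r)). apply (dexp (fun y => - L * y) r (- L) (dlin (- L) r)). }
  assert (HWb : forall r, 0 < r < t -> Wd r <= Emax ^ 2).
  { intros r Hr. assert (Hr' : 0 < r < T) by lra.
    unfold Wd. rewrite (HGE r Hr').
    set (b := ext T a r (Y r) + ext T a r (X r)).
    assert (Hb : Rabs b <= 2 * K).
    { unfold b. eapply Rle_trans; [apply Rabs_triang|]. pose proof (HK r (Y r)). pose proof (HK r (X r)). lra. }
    apply Rabs_le_between in Hb.
    assert (HEr := HEb r Hr'). apply Rabs_le_between in HEr.
    set (e := exp (- L * r)).
    assert (He0 : 0 < e) by apply exp_pos.
    assert (He1 : e <= 1) by (unfold e; rewrite <- exp_0; apply exp_mono; unfold L; nra).
    set (g := G r). set (E' := E r).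
    assert (H1 : b * (g * g) <= 2 * K * (g * g)) by (apply Rmult_le_compat_r; nra).
    assert (H2 : 2 * g * E' <= g * g + E' * E').
    { pose proof (Rle_0_sqr (g - E')) as Hsq. unfold Rsqr in Hsq. nra. }
    assert (H3 : ((b * g + E') * g + g * (b * g + E') - L * (g * g)) <= E' * E') by (unfold L; nra).
    assert (H4 : E' * E' <= Emax ^ 2).
    { assert (HEr' : - Emax <= E' <= Emax) by exact HEr. assert (0 <= (Emax - E') * (Emax + E')) by (apply Rmult_le_pos; lra). nra. }
    replace (((b * g + E') * g + g * (b * g + E')) * e + g * g * (- L * e))
      with (((b * g + E') * g + g * (b * g + E') - L * (g * g)) * e) by ring.
    assert (H5 : 0 <= E' * E') by nra.
    apply Rle_trans with (E' * E' * e). apply Rmult_le_compat_r; lra. nra. }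
  assert (HW := incr_bound W Wd t (Emax ^ 2) (proj1 Ht) (fun r Hr => HWd r ltac:(lra)) (fun r _ => HWc r) HWb).
  assert (HX0 : X 0 = x0) by (rewrite HXe by lra; auto).
  assert (HY0 : Y 0 = x0 + h) by (unfold Y; rewrite HX0, HJ0; ring).
  assert (HG0 : Rabs (G 0) <= eps * eta).
  { unfold G. rewrite HY0, HX0.
    assert (HYr0 := HYr 0 ltac:(lra)). rewrite HY0 in HYr0.
    assert (Hh' : Rabs (x0 + h - x0) < dF).
    { replace (x0 + h - x0) with h by ring. rewrite Hh. nra. }
    assert (HF0 := HF 0 x0 (x0 + h) ltac:(lra) Hx0 HYr0 Hh').
    rewrite (ext_eq T ax 0 x0), Hax0 in HF0 by lra.
    replace (x0 + h - x0) with h in HF0 by ring. rewrite Hh in HF0.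
    replace (ext T a 0 (x0 + h) - ext T a 0 x0 - 0 * h) with (ext T a 0 (x0 + h) - ext T a 0 x0) in HF0 by ring.
    exact HF0. }
  unfold W in HW. rewrite Rmult_0_r, exp_0, Rmult_1_r in HW.
  assert (HGt2 : G t * G t <= (eps * eta) ^ 2 * C2).
  { assert (Hg0 : G 0 * G 0 <= (eps * eta) ^ 2).
    { assert (0 <= eps * eta) by nra. pose proof (Rabs_pos (G 0)).
      replace (G 0 * G 0) with (Rabs (G 0) * Rabs (G 0)) by (rewrite <- Rabs_mult; apply Rabs_pos_eq; nra). nra. }
    assert (HEt : Emax ^ 2 * t <= (eps * eta) ^ 2 * (T * M1 ^ 2 * Jmax ^ 2)).
    { unfold Emax. replace ((M1 * (eta * Jmax * eps)) ^ 2 * t) with ((eps * eta) ^ 2 * (t * M1 ^ 2 * Jmax ^ 2)) by ring.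
      apply Rmult_le_compat_l; [nra|]. apply Rmult_le_compat_r; [nra|]. apply Rmult_le_compat_r; nra. }
    assert (HWt : G t * G t * exp (- L * t) <= (eps * eta) ^ 2 * (1 + T * M1 ^ 2 * Jmax ^ 2)) by lra.
    assert (Eexp : exp (- L * t) * exp (L * t) = 1) by (rewrite <- exp_plus; replace (- L * t + L * t) with 0 by ring; apply exp_0).
    assert (HLt : exp (L * t) <= exp (L * T)) by (apply exp_mono; unfold L; nra).
    pose proof (exp_pos (L * t)).
    assert (HP : 0 <= (eps * eta) ^ 2 * (1 + T * M1 ^ 2 * Jmax ^ 2)).
    { apply Rmult_le_pos; [nra|]. assert (0 <= T * M1 ^ 2 * Jmax ^ 2) by (apply Rmult_le_pos; [apply Rmult_le_pos|]; nra). lra. }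
    replace (G t * G t) with (G t * G t * exp (- L * t) * exp (L * t)) by (rewrite Rmult_assoc, Eexp; ring).
    apply Rle_trans with ((eps * eta) ^ 2 * (1 + T * M1 ^ 2 * Jmax ^ 2) * exp (L * t)).
    apply Rmult_le_compat_r; lra.
    unfold C2. replace ((eps * eta) ^ 2 * (exp (L * T) * (1 + T * M1 ^ 2 * Jmax ^ 2))) with ((eps * eta) ^ 2 * (1 + T * M1 ^ 2 * Jmax ^ 2) * exp (L * T)) by ring.
    apply Rmult_le_compat_l; lra. }
  assert (HGt : Rabs (G t) <= eps * eta * (1 + C2)).
  { assert (Hp : 0 <= eps * eta * (1 + C2)) by (apply Rmult_le_pos; nra).
    rewrite <- (Rabs_pos_eq (eps * eta * (1 + C2))) by auto. apply Rsqr_le_abs_0. unfold Rsqr.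
    apply Rle_trans with ((eps * eta) ^ 2 * C2); auto.
    replace (eps * eta * (1 + C2) * (eps * eta * (1 + C2))) with ((eps * eta) ^ 2 * ((1 + C2) * (1 + C2))) by ring.
    apply Rmult_le_compat_l; nra. }
  destruct (HYX t Ht) as [HYXt1 HYXt2].
  assert (HFt := HF t (X t) (Y t) Ht (HXr t) (HYr t Ht) ltac:(rewrite HYXt1; nra)).
  rewrite HYXt1 in HFt. fold (G t) in HFt.
  assert (HYt : Y t - X t = h * J t) by (unfold Y; ring).
  rewrite HYt in HFt.
  destruct (HJb t Ht) as [HJt1 HJt2].
  assert (Hm1 : Rabs (ext T ax t (X t)) * (eta * J t) <= eps * eta * (1 + C2) + eps * (eta * J t)).
  { replace (Rabs (ext T ax t (X t)) * (eta * J t)) with (Rabs (ext T ax t (X t) * (h * J t))).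
    2:{ rewrite !Rabs_mult, Hh, (Rabs_pos_eq (J t)) by lra. ring. }
    pose proof (Rabs_triang (G t - ext T ax t (X t) * (h * J t)) (- G t)).
    rewrite Rabs_Ropp in H.
    replace (G t - ext T ax t (X t) * (h * J t) + - G t) with (- (ext T ax t (X t) * (h * J t))) in H by ring.
    rewrite Rabs_Ropp in H. lra. }
  assert (Hm2 : Rabs (ext T ax t (X t)) * (eta * Jmin) <= eps * eta * (1 + C2 + Jmax)).
  { apply Rle_trans with (Rabs (ext T ax t (X t)) * (eta * J t)).
    apply Rmult_le_compat_l; [apply Rabs_pos| nra].
    eapply Rle_trans; [exact Hm1|]. nra. }
  apply (Rmult_le_reg_r (eta * Jmin)); [nra|].
  replace (eps * ((1 + C2 + Jmax) / Jmin) * (eta * Jmin)) with (eps * eta * (1 + C2 + Jmax)) by (field; lra).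
  exact Hm2.
Qed.
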